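(* Let $\phi,\alpha,\beta$ be arbitrary formulas (not necessarily sentences). Then $$\{\phi\vee(\alpha\to\beta^n): n\in\mathbb N\}\vDash\phi\vee(\alpha\to(\alpha\&\beta)).$$
   Context: Formulas are built from a countable predicate language (variables, constants, predicate symbols) with connectives $\to,\&$, constant $0$ and quantifiers $\forall,\exists$; abbreviations: $\phi\wedge\psi$ is $\phi\&(\phi\to\psi)$, $\phi\vee\psi$ is $((\phi\to\psi)\to\psi)\wedge((\psi\to\phi)\to\phi)$, $1$ is $0\to0$, $\beta^n$ is the $n$-fold $\&$-power of $\beta$. A continuous t-norm is a continuous binary operation $\cdot$ on $[0,1]$ that is commutative, associative, monotone in each argument and has $1$ as unit; it is regarded as the algebra $([0,1],\cdot,\to,\min,\max,0,1)$ where $\to$ is its residuum ($x\cdot y\le z$ iff $x\le y\to z$). For such a $\mathbf B$, a $\mathbf B$-structure $\mathbf M$ consists of a nonempty set $M$, an element $c^{\mathbf M}\in M$ for each constant $c$, and a function $P^{\mathbf M}:M^n\to[0,1]$ for each $n$-ary predicate $P$. For a valuation $v$ (a map from variables to $M$), $\|\phi\|^{\mathbf M,v}$ is defined inductively: $\|P(t_1,\dots,t_n)\|^{\mathbf M,v}=P^{\mathbf M}(t_1^{\mathbf M,v},\dots,t_n^{\mathbf M,v})$ (with $c^{\mathbf M,v}=c^{\mathbf M}$, $x^{\mathbf M,v}=v(x)$), $\|0\|=0$, $\&$ and $\to$ are interpreted by $\cdot$ and its residuum, $\|\forall x\psi\|^{\mathbf M,v}=\inf\{\|\psi\|^{\mathbf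 M,w}:w\equiv_x v\}$ and $\|\exists x\psi\|^{\mathbf M,v}=\sup\{\|\psi\|^{\mathbf M,w}:w\equiv_x v\}$, where $w\equiv_x v$ means $w$ agrees with $v$ except possibly at $x$. $\mathbf M$ is a model of $\phi$ if $\|\phi\|^{\mathbf M,v}=1$ for every valuation $v$, and a model of a set $\Gamma$ if it is a model of each member. $\Gamma\vDash\phi$ means: for every continuous t-norm $\mathbf B$ and every $\mathbf B$-structure $\mathbf M$, if $\mathbf M$ is a model of $\Gamma$ then $\mathbf M$ is a model of $\phi$. *)

(* Defs.v *)
From Stdlib Require Import Reals.
From mathcomp Require Import all_boot.
From mathcomp Require Import classical_sets reals Rstruct.

Set Implicit Arguments.
Unset Strict Implicit.
Unset Printing Implicit Defensive.

Section Language.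
Variables (C P : countType) (ar : P -> nat).

Inductive term : Type :=
  | Var : nat -> term
  | Cst : C -> term.

Inductive formula : Type :=
  | Atom : forall p : P, ('I_(ar p) -> term) -> formula
  | Zero : formula
  | Imp : formula -> formula -> formula
  | Conj : formula -> formula -> formula
  | All : nat -> formula -> formula
  | Ex : nat -> formula -> formula.

Definition One : formula := Imp Zero Zero.
Definition Wedge (a b : formula) : formula := Conj a (Imp a b).
Definition Vee (a b : formula) : formula :=
  Wedge (Imp (Imp a b) b) (Imp (Imp b a) a).
Fixpoint Pow (b : formula) (n : nat) : formula :=
  match n with
  | 0 => One
  | 1 => b
  | S m => Conj b (Pow b m)
  end.

Local Open Scope R_scope.

Definition unit01 (x : R) : Prop := 0 <= x <= 1.

Definition is_cont_tnorm (t : R -> R -> R) : Prop :=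
  (forall x y, unit01 x -> unit01 y -> unit01 (t x y)) /\
  (forall x y, unit01 x -> unit01 y -> t x y = t y x) /\
  (forall x y z, unit01 x -> unit01 y -> unit01 z -> t x (t y z) = t (t x y) z) /\
  (forall x y z, unit01 x -> unit01 y -> unit01 z -> x <= y -> t x z <= t y z) /\
  (forall x, unit01 x -> t x 1 = x) /\
  (forall x y, unit01 x -> unit01 y -> forall eps, 0 < eps ->
     exists delta, 0 < delta /\
       forall x' y', unit01 x' -> unit01 y' ->
         Rabs (x - x') < delta -> Rabs (y - y') < delta ->
         Rabs (t x y - t x' y') < eps).

Definition resid (t : R -> R -> R) (x y : R) : R :=
  sup (fun z : R => unit01 z /\ t x z <= y).

Record structure : Type := Structure {
  dom : Type;
  dom_elt : dom;                                     (* nonempty *)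
  cst_i : C -> dom;
  pred_i : forall p : P, ('I_(ar p) -> dom) -> R;
  pred_i01 : forall p (xs : 'I_(ar p) -> dom), unit01 (pred_i xs)
}.

Definition tm_eval (M : structure) (v : nat -> dom M) (s : term) : dom M :=
  match s with Var n => v n | Cst c => cst_i M c end.

Definition upd (M : structure) (v : nat -> dom M) (x : nat) (m : dom M) :
  nat -> dom M := fun n => if n == x then m else v n.

Fixpoint eval (t : R -> R -> R) (M : structure) (v : nat -> dom M)
  (f : formula) : R :=
  match f with
  | Atom p ts => pred_i (s:=M) (p:=p) (fun i => @tm_eval M v (ts i))
  | Zero => 0
  | Imp a b => resid t (@eval t M v a) (@eval t M v b)
  | Conj a b => t (@eval t M v a) (@eval t M v b)
  | All x a => inf (fun r : R => exists m : dom M, r = @eval t M (@upd M v x m) a)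
  | Ex x a => sup (fun r : R => exists m : dom M, r = @eval t M (@upd M v x m) a)
  end.

Definition model_of (t : R -> R -> R) (M : structure) (f : formula) : Prop :=
  forall v : nat -> dom M, @eval t M v f = 1.

Definition entails (Gamma : formula -> Prop) (phi : formula) : Prop :=
  forall t : R -> R -> R, is_cont_tnorm t ->
  forall M : structure,
    (forall g, Gamma g -> model_of t M g) -> model_of t M phi.

End Language.

(* Main.v *)
Require Import Defs.
From Stdlib Require Import Reals.
From Stdlib Require Import Lra.
From mathcomp Require Import all_boot.
From mathcomp Require Import classical_sets reals Rstruct.
Local Open Scope R_scope.

Lemma sup_ub' (E : set R) B x : (forall z, E z -> z <= B) -> E x -> x <= sup E.
Proof.
move=> hB Ex.
have hs : has_sup E.
  split; first by exists x.
  by exists B => z Ez; apply/RleP; apply: hB.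
by apply/RleP; apply: (sup_upper_bound hs).
Qed.

Lemma sup_le' (E : set R) B : (exists x, E x) -> (forall z, E z -> z <= B) -> sup E <= B.
Proof.
move=> [x Ex] hB; apply/RleP; apply: ge_sup; first by exists x.
by move=> z Ez; apply/RleP; apply: hB.
Qed.

Lemma sup_adh' (E : set R) B eps : (exists x, E x) -> (forall z, E z -> z <= B) ->
  0 < eps -> exists e, E e /\ sup E - eps < e.
Proof.
move=> [x Ex] hB he.
have hs : has_sup E.
  split; first by exists x.
  by exists B => z Ez; apply/RleP; apply: hB.
move/RltP: (he) => he'.
have [e Ee lt] := sup_adherent he' hs.
exists e; split => //. move/RltP: lt. rewrite RminusE. done.
Qed.

Lemma inf_lb' (E : set R) B x : (forall z, E z -> B <= z) -> E x -> inf E <= x.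
Proof.
move=> hB Ex.
have hl : has_lbound E by exists B => z Ez; apply/RleP; apply: hB.
by apply/RleP; apply: (ge_inf hl).
Qed.

Lemma inf_ge' (E : set R) x : (exists y, E y) -> (forall z, E z -> x <= z) -> x <= inf E.
Proof.
move=> [y Ey] hB; apply/RleP; apply: lb_le_inf; first by exists y.
by move=> z Ez; apply/RleP; apply: hB.
Qed.

Lemma inf_adh' (E : set R) B eps : (exists x, E x) -> (forall z, E z -> B <= z) ->
  0 < eps -> exists e, E e /\ e < inf E + eps.
Proof.
move=> [x Ex] hB he.
have hs : has_inf E.
  split; first by exists x.
  by exists B => z Ez; apply/RleP; apply: hB.
move/RltP: (he) => he'.
have [e Ee lt] := inf_adherent he' hs.
exists e; split => //. move/RltP: lt. done.
Qed.


Lemma tn_01 {t} : is_cont_tnorm t -> forall {x y}, unit01 x -> unit01 y -> unit01 (t x y).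
Proof. by case. Qed.
Lemma tn_comm {t} : is_cont_tnorm t -> forall {x y}, unit01 x -> unit01 y -> t x y = t y x.
Proof. by case=> _ []. Qed.
Lemma tn_assoc {t} : is_cont_tnorm t -> forall {x y z}, unit01 x -> unit01 y -> unit01 z -> t x (t y z) = t (t x y) z.
Proof. by case=> _ [] _ []. Qed.
Lemma tn_mono {t} : is_cont_tnorm t -> forall {x y z}, unit01 x -> unit01 y -> unit01 z -> x <= y -> t x z <= t y z.
Proof. by case=> _ [] _ [] _ []. Qed.
Lemma tn_one {t} : is_cont_tnorm t -> forall {x}, unit01 x -> t x 1 = x.
Proof. by case=> _ [] _ [] _ [] _ []. Qed.
Lemma tn_cont {t} : is_cont_tnorm t -> forall {x y}, unit01 x -> unit01 y -> forall eps, 0 < eps ->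
     exists delta, 0 < delta /\
       forall x' y', unit01 x' -> unit01 y' ->
         Rabs (x - x') < delta -> Rabs (y - y') < delta ->
         Rabs (t x y - t x' y') < eps.
Proof. by case=> _ [] _ [] _ [] _ []. Qed.

Lemma u01_1 : unit01 1. Proof. unfold unit01; lra. Qed.
Lemma u01_0 : unit01 0. Proof. unfold unit01; lra. Qed.

Lemma tn_mono_r {t} : is_cont_tnorm t -> forall {x y z}, unit01 x -> unit01 y -> unit01 z -> y <= z -> t x y <= t x z.
Proof.
move=> Ht x y z hx hy hz le.
rewrite (tn_comm Ht hx hy) (tn_comm Ht hx hz); exact: tn_mono.
Qed.

Lemma tn_le_l {t} : is_cont_tnorm t -> forall {x y}, unit01 x -> unit01 y -> t x y <= x.
Proof.
move=> Ht x y hx hy. rewrite -{2}(tn_one Ht hx).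
apply: tn_mono_r => //; [exact: u01_1| case: hy; lra].
Qed.

Lemma tn_le_r {t} : is_cont_tnorm t -> forall {x y}, unit01 x -> unit01 y -> t x y <= y.
Proof.
move=> Ht x y hx hy. rewrite (tn_comm Ht hx hy). exact: tn_le_l.
Qed.

Lemma tn_one_l {t} : is_cont_tnorm t -> forall {y}, unit01 y -> t 1 y = y.
Proof. move=> Ht y hy. rewrite (tn_comm Ht u01_1 hy). exact: tn_one. Qed.

Lemma tn_zero {t} : is_cont_tnorm t -> forall {x}, unit01 x -> t x 0 = 0.
Proof.
move=> Ht x hx. have := tn_le_r Ht hx u01_0. have := tn_01 Ht hx u01_0.
unfold unit01; lra.
Qed.

Lemma tn_eq1 {t} : is_cont_tnorm t -> forall {x y}, unit01 x -> unit01 y -> t x y = 1 -> x = 1 /\ y = 1.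
Proof.
move=> Ht x y hx hy e. have := tn_le_l Ht hx hy. have := tn_le_r Ht hx hy.
move: hx hy; unfold unit01; lra.
Qed.

Lemma resid_01 {t} : is_cont_tnorm t -> forall {x y}, unit01 x -> unit01 y -> unit01 (resid t x y).
Proof.
move=> Ht x y hx hy. rewrite /resid. split.
- apply: (@sup_ub' _ 1); first by move=> z [[]].
  split; first exact: u01_0. rewrite tn_zero //. by case: hy.
- apply: sup_le'; last by move=> z [[]].
  exists 0; split; first exact: u01_0. rewrite tn_zero //. by case: hy.
Qed.

Lemma resid_1_iff {t} : is_cont_tnorm t -> forall {x y}, unit01 x -> unit01 y -> (resid t x y = 1 <-> x <= y).
Proof.
move=> Ht x y hx hy. split.
- move=> e. apply: Rnot_lt_le => lt.
  have [d [hd Hd]] := tn_cont Ht hx u01_1 (x - y) ltac:(lra).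
  have h0 : t x 0 <= y by rewrite tn_zero //; case: hy; lra.
  have [z [[hz hz2] hz3]] := @sup_adh' (fun z : R => unit01 z /\ t x z <= y) 1 d
     (ex_intro _ 0 (conj u01_0 h0))
     (fun z h => proj2 (proj1 h)) hd.
  rewrite /resid in e. rewrite e in hz3.
  have := Hd x z hx hz ltac:(rewrite Rminus_diag Rabs_R0; lra)
     ltac:(apply: Rabs_def1; case: hz; lra).
  rewrite tn_one // => /Rabs_def2. lra.
- move=> le. have := resid_01 Ht hx hy. case=> _ h1.
  apply: Rle_antisym => //. rewrite /resid.
  apply: (@sup_ub' _ 1); first by move=> z [[]].
  split; first exact: u01_1. by rewrite tn_one.
Qed.

Lemma resid_1l {t} : is_cont_tnorm t -> forall {y}, unit01 y -> resid t 1 y = y.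
Proof.
move=> Ht y hy. rewrite /resid. apply: Rle_antisym.
- apply: sup_le'; first by exists y; split => //; rewrite tn_one_l //; apply: Rle_refl.
  move=> z [hz]. by rewrite tn_one_l.
- apply: (@sup_ub' _ 1); first by move=> z [[]].
  split => //. rewrite tn_one_l //; lra.
Qed.

Lemma eval_01 {t} : is_cont_tnorm t -> forall (C P : countType) (ar : P -> nat)
  (M : structure C ar) (f : formula C ar) (v : nat -> dom M), unit01 (eval t v f).
Proof.
move=> Ht C P ar M f; elim: f => [p ts||a IHa b IHb|a IHa b IHb|x a IHa|x a IHa] v /=.
- exact: pred_i01.
- exact: u01_0.
- exact: resid_01.
- exact: tn_01.
- have ne : exists r, (fun r : R => exists m : dom M, r = eval t (upd v x m) a) r.
    by exists (eval t (upd v x (dom_elt M)) a); exists (dom_elt M).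
  split.
  + apply: inf_ge' => // z [m ->]. by case: (IHa (upd v x m)).
  + apply: Rle_trans; last by case: (IHa (upd v x (dom_elt M))) => _ h; exact: h.
    apply: (@inf_lb' _ 0); last by exists (dom_elt M).
    by move=> z [m ->]; case: (IHa (upd v x m)).
- have ne : exists r, (fun r : R => exists m : dom M, r = eval t (upd v x m) a) r.
    by exists (eval t (upd v x (dom_elt M)) a); exists (dom_elt M).
  split.
  + apply: Rle_trans; first by case: (IHa (upd v x (dom_elt M))) => h _; exact: h.
    apply: (@sup_ub' _ 1); last by exists (dom_elt M).
    by move=> z [m ->]; case: (IHa (upd v x m)).
  + apply: sup_le' => // z [m ->]. by case: (IHa (upd v x m)).
Qed.

Definition veeR (t : R -> R -> R) (A B : R) : R :=
  t (resid t (resid t A B) B) (resid t (resid t (resid t A B) B) (resid t (resid t B A) A)).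

Lemma vee_iff {t} : is_cont_tnorm t -> forall A B, unit01 A -> unit01 B ->
  (veeR t A B = 1 <-> A = 1 \/ B = 1).
Proof.
move=> Ht A B hA hB. rewrite /veeR.
have hAB := resid_01 Ht hA hB. have hBA := resid_01 Ht hB hA.
have hX := resid_01 Ht hAB hB. have hY := resid_01 Ht hBA hA.
split.
- move=> /(tn_eq1 Ht hX (resid_01 Ht hX hY)) [eX eXY].
  move: eXY; rewrite (resid_1_iff Ht hX hY) eX => lY.
  move: eX; rewrite (resid_1_iff Ht hAB hB) => l1.
  have eY : resid t (resid t B A) A = 1 by case: hY; lra.
  move: eY; rewrite (resid_1_iff Ht hBA hA) => l2.
  case: (Rle_dec A B) => lAB.
  + right. move: (proj2 (resid_1_iff Ht hA hB) lAB) => e. case: hB; lra.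
  + left. have lBA : B <= A by lra.
    move: (proj2 (resid_1_iff Ht hB hA) lBA) => e. case: hA; lra.
- have r11 : resid t 1 1 = 1 by apply/(resid_1_iff Ht u01_1 u01_1); lra.
  case=> ->.
  + rewrite (resid_1l Ht hB). rewrite (proj2 (resid_1_iff Ht hB hB) (Rle_refl _)).
    rewrite (proj2 (resid_1_iff Ht hB u01_1)); last by case: hB.
    rewrite (proj2 (resid_1_iff Ht u01_1 u01_1)); last lra.
    rewrite r11 tn_one_l //. exact: u01_1.
  + rewrite (proj2 (resid_1_iff Ht hA u01_1)); last by case: hA.
    rewrite r11 (resid_1l Ht hA) (proj2 (resid_1_iff Ht hA hA) (Rle_refl _)).
    rewrite r11 tn_one_l //. exact: u01_1.
Qed.

Fixpoint tpow (t : R -> R -> R) (b : R) (n : nat) : R :=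
  match n with 0 => 1 | S m => t b (tpow t b m) end.

Lemma tpow_01 {t} : is_cont_tnorm t -> forall b n, unit01 b -> unit01 (tpow t b n).
Proof.
move=> Ht b n hb; elim: n => [|n IH] /=; [exact: u01_1| exact: tn_01].
Qed.

Lemma eval_pow {t} : is_cont_tnorm t -> forall (C P : countType) (ar : P -> nat)
  (M : structure C ar) (f : formula C ar) (v : nat -> dom M) n,
  eval t v (Pow f n) = tpow t (eval t v f) n.
Proof.
move=> Ht C P ar M f v n.
have hb := @eval_01 _ Ht C P ar M f v.
elim: n => [|n IH].
- rewrite /=. apply/(resid_1_iff Ht u01_0 u01_0); lra.
- case: n IH => [|n] IH /=.
  + by rewrite tn_one.
  + by rewrite IH.
Qed.

Definition clamp (z : R) : R := Rmax 0 (Rmin 1 z).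

Lemma clamp_01 z : unit01 (clamp z).
Proof. rewrite /clamp /unit01 /Rmax /Rmin; repeat case: Rle_dec; lra. Qed.

Lemma clamp_lip x y : Rabs (clamp x - clamp y) <= Rabs (x - y).
Proof.
rewrite /clamp /Rmax /Rmin.
case: (Rle_dec 1 x) => ?; case: (Rle_dec 1 y) => ?;
repeat case: Rle_dec => ?; rewrite /Rabs; repeat case: Rcase_abs => ?; lra.
Qed.

Lemma clamp_id z : unit01 z -> clamp z = z.
Proof. rewrite /clamp /unit01 /Rmax /Rmin; repeat case: Rle_dec; lra. Qed.

Lemma key {t} : is_cont_tnorm t -> forall a b, unit01 a -> unit01 b ->
  (forall n, a <= tpow t b n) -> a <= t a b.
Proof.
move=> Ht a b ha hb hn.
set E := fun r : R => exists n, r = tpow t b n.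
have neE : exists r, E r by exists 1, 0%nat.
have lbE : forall z, E z -> 0 <= z by move=> z [n ->]; case: (tpow_01 Ht _ n hb).
set c := inf E.
have hac : a <= c by apply: inf_ge' => // z [n ->].
have hc1 : c <= 1 by apply: (@inf_lb' _ 0) => //; exists 0%nat.
have hc : unit01 c by split => //; case: ha; lra.
have hcn : forall n, c <= tpow t b n by move=> n; apply: (@inf_lb' _ 0) => //; exists n.
have e1 : t b c <= c.
  apply: inf_ge' => // z [[|n] ->] /=.
  - by case: (tn_01 Ht hb hc).
  - apply: tn_mono_r => //; exact: tpow_01.
have e2 : c <= t b c.
  apply: Rnot_lt_le => lt.
  have [d [hd Hd]] := tn_cont Ht hb hc (c - t b c) ltac:(lra).
  have [r [[n ->] hr]] := @inf_adh' E 0 d neE lbE hd.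
  have := hcn n. move=> hcn'. rewrite -/c in hr.
  have := Hd b (tpow t b n) hb (tpow_01 Ht _ n hb) ltac:(rewrite Rminus_diag Rabs_R0; lra)
    ltac:(apply: Rabs_def1; lra).
  move=> /Rabs_def2 [h1 h2].
  have := hcn (S n). rewrite /=. lra.
have ebc : t b c = c by lra.
pose f z := t c (clamp z) - a.
have fc : continuity f.
  move=> x eps heps.
  have [d [hd Hd]] := tn_cont Ht hc (clamp_01 x) eps heps.
  exists d; split => // y [_ hy].
  rewrite /= /Rdist in hy *.
  rewrite /f.
  replace (t c (clamp y) - a - (t c (clamp x) - a)) with (- (t c (clamp x) - t c (clamp y))) by ring.
  rewrite Rabs_Ropp. apply: Hd => //; first exact: clamp_01.
  - rewrite Rminus_diag Rabs_R0; lra.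
  - apply: Rle_lt_trans; first exact: clamp_lip.
    by rewrite Rabs_minus_sym.
have f0 : f 0 = - a by rewrite /f (clamp_id _ u01_0) tn_zero //; ring.
have f1 : f 1 = c - a by rewrite /f (clamp_id _ u01_1) tn_one.
have [w [hw fw]] := IVT_cor f 0 1 fc ltac:(lra) ltac:(rewrite f0 f1; case: ha; nra).
have hw' : unit01 w by [].
move: fw; rewrite /f (clamp_id _ hw') => fw.
have ea : t c w = a by lra.
rewrite -ea.
rewrite (tn_comm Ht (tn_01 Ht hc hw') hb) (tn_assoc Ht hb hc hw') ebc.
apply: Rle_refl.
Qed.

Theorem mainTheorem6 (C P : countType) (ar : P -> nat)
  (phi alpha beta : @formula C P ar) :
  entails (fun g => exists n : nat, g = Vee phi (Imp alpha (Pow beta n)))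
          (Vee phi (Imp alpha (Conj alpha beta))).
Proof.
move=> t Ht M Hg v.
have hp := @eval_01 _ Ht C P ar M phi v.
have ha := @eval_01 _ Ht C P ar M alpha v.
have hb := @eval_01 _ Ht C P ar M beta v.
have H n : veeR t (eval t v phi) (resid t (eval t v alpha) (tpow t (eval t v beta) n)) = 1.
  rewrite -(@eval_pow _ Ht C P ar M beta v n).
  exact: (Hg _ (ex_intro _ n erefl) v).
change (veeR t (eval t v phi) (resid t (eval t v alpha) (t (eval t v alpha) (eval t v beta))) = 1).
have hab := tn_01 Ht ha hb.
apply/(vee_iff Ht _ _ hp (resid_01 Ht ha hab)).
case: (Req_dec (eval t v phi) 1) => [e|ne]; first by left.
right. apply/(resid_1_iff Ht ha hab).
apply: key => // n.
have := H n.
move/(vee_iff Ht _ _ hp (resid_01 Ht ha (tpow_01 Ht _ n hb))) => [//|].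
by move/(resid_1_iff Ht ha (tpow_01 Ht _ n hb)).
Qed.
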